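(* Let $A\subseteq\mathbb{N}$ and let $f:\mathbb{N}^3\to\mathbb{N}$ be defined by $f(m,n_1,n_2)=n_1$ if $m\in A$ and $f(m,n_1,n_2)=n_2$ otherwise. Then either $f$ is not strictly definable, or $f\in\mathcal{G}$.
   Context: We work in the simply typed $\lambda$-calculus (type assignment to untyped $\lambda$-terms) with a single base type $o$, with $\beta\eta$-conversion as equality. For a type $\tau$, $\omega_\tau=(\tau\to\tau)\to\tau\to\tau$. The Church numeral of $n$ is $\rho(n)=\lambda f x.f^{n}x$. A function $f:\mathbb{N}^k\to\mathbb{N}$ is strictly definable if there exist a type $\tau$ and a term $E$ with $\vdash E:\omega_\tau\to\cdots\to\omega_\tau\to\omega_\tau$ ($k$ arguments) such that $E\,\rho(n_1)\cdots\rho(n_k)=_{\beta\eta}\rho(f(n_1,\dots,n_k))$ for all $n_1,\dots,n_k$. Extended polynomials: the smallest class of functions over $\mathbb{N}$ containing the constants $0$ and $1$, projections, addition, multiplication and $\mathrm{ifzero}(n,m,p)=(\text{if } n=0 \text{ then } m \text{ else } p)$, closed under composition. $\mathcal{G}$ is the smallest class of functions over $\mathbb{N}$ that is closed under composition and contains: all extended polynomials; for every $l\geq 2$ the function $f_1^{l}(m,n_1,\dots,n_l)=n_i$ where $i=(m\bmod l)+1$; and for every $l\geq 1$ the function $f_2^{l}(m,n_1,n_2)=(\text{if } m\leq l \text{ then } n_1 \text{ else } n_2)$. *)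

(* Defs.v *)
From mathcomp Require Import all_boot.
Set Implicit Arguments. Unset Strict Implicit. Unset Printing Implicit Defensive.

Inductive ty : Type := TO : ty | TArr : ty -> ty -> ty.

Inductive tm : Type :=
| Var : nat -> tm
| App : tm -> tm -> tm
| Lam : tm -> tm.

Fixpoint lift_tm (c : nat) (t : tm) : tm :=
  match t with
  | Var n => if n < c then Var n else Var n.+1
  | App t1 t2 => App (lift_tm c t1) (lift_tm c t2)
  | Lam t1 => Lam (lift_tm c.+1 t1)
  end.

Fixpoint subst_tm (j : nat) (s : tm) (t : tm) : tm :=
  match t with
  | Var n => if n == j then s else if n < j then Var n else Var n.-1
  | App t1 t2 => App (subst_tm j s t1) (subst_tm j s t2)
  | Lam t1 => Lam (subst_tm j.+1 (lift_tm 0 s) t1)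
  end.

Inductive step : tm -> tm -> Prop :=
| st_beta t u : step (App (Lam t) u) (subst_tm 0 u t)
| st_eta t : step (Lam (App (lift_tm 0 t) (Var 0))) t
| st_appl t t' u : step t t' -> step (App t u) (App t' u)
| st_appr t u u' : step u u' -> step (App t u) (App t u')
| st_lam t t' : step t t' -> step (Lam t) (Lam t').

Inductive conv : tm -> tm -> Prop :=
| conv_step t u : step t u -> conv t u
| conv_refl t : conv t t
| conv_sym t u : conv t u -> conv u t
| conv_trans t u v : conv t u -> conv u v -> conv t v.

Inductive typed : seq ty -> tm -> ty -> Prop :=
| ty_var G n : n < size G -> typed G (Var n) (nth TO G n)
| ty_app G t u s r : typed G t (TArr s r) -> typed G u s -> typed G (App t u) r
| ty_lam G t s r : typed (s :: G) t r -> typed G (Lam t) (TArr s r).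

Definition omega (t : ty) : ty := TArr (TArr t t) (TArr t t).

Definition church (n : nat) : tm := Lam (Lam (iter n (App (Var 1)) (Var 0))).

Definition arrows (k : nat) (s r : ty) : ty := iter k (TArr s) r.

Definition apps (E : tm) (args : seq tm) : tm := foldl App E args.

Definition fn (k : nat) := ('I_k -> nat) -> nat.

Definition strictly_definable (k : nat) (f : fn k) : Prop :=
  exists (t : ty) (E : tm),
    typed [::] E (arrows k (omega t) (omega t)) /\
    forall x : 'I_k -> nat,
      conv (apps E [seq church (x i) | i <- enum 'I_k]) (church (f x)).

Definition comp_fn (k m : nat) (h : fn m) (gs : 'I_m -> fn k) : fn k :=
  fun x => h (fun i => gs i x).

Definition arg3 (x : 'I_3 -> nat) (i : nat) : nat := x (inord i).

Inductive ext_poly : forall k, fn k -> Prop :=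
| ep_zero k : ext_poly (fun _ : 'I_k -> nat => 0)
| ep_one k : ext_poly (fun _ : 'I_k -> nat => 1)
| ep_proj k (i : 'I_k) : ext_poly (fun x : 'I_k -> nat => x i)
| ep_add : ext_poly (fun x : 'I_2 -> nat => x ord0 + x ord_max)
| ep_mul : ext_poly (fun x : 'I_2 -> nat => x ord0 * x ord_max)
| ep_ifzero : ext_poly (fun x : 'I_3 -> nat =>
                          if arg3 x 0 == 0 then arg3 x 1 else arg3 x 2)
| ep_comp k m (h : fn m) (gs : 'I_m -> fn k) :
    ext_poly h -> (forall i, ext_poly (gs i)) -> ext_poly (comp_fn h gs)
| ep_ext k (f g : fn k) : ext_poly f -> (forall x, f x = g x) -> ext_poly g.

Definition f1 (l : nat) : fn l.+1 :=
  fun x => x (inord ((x ord0) %% l).+1).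

Definition f2 (l : nat) : fn 3 :=
  fun x => if arg3 x 0 <= l then arg3 x 1 else arg3 x 2.

Inductive classG : forall k, fn k -> Prop :=
| G_ep k (f : fn k) : ext_poly f -> classG f
| G_f1 l : 2 <= l -> @classG l.+1 (@f1 l)
| G_f2 l : 1 <= l -> @classG 3 (f2 l)
| G_comp k m (h : fn m) (gs : 'I_m -> fn k) :
    classG h -> (forall i, classG (gs i)) -> classG (comp_fn h gs)
| G_ext k (f g : fn k) : classG f -> (forall x, f x = g x) -> classG g.

(* Main.v *)
Require Import Defs.
From mathcomp Require Import all_boot zify.
From Stdlib Require Import Eqdep_dec ClassicalEpsilon Classical_Prop.
Set Implicit Arguments. Unset Strict Implicit.


Ltac sv := simpl; repeat (case: ifP => /=); intros; try done; try (f_equal; lia); try lia.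

Lemma lift_lift t c d : c <= d -> lift_tm d.+1 (lift_tm c t) = lift_tm c (lift_tm d t).
Proof.
elim: t c d => [n|t1 IH1 t2 IH2|t IH] c d H /=.
- sv.
- by rewrite IH1 // IH2.
- by rewrite IH.
Qed.

Lemma subst_lift t c u : subst_tm c u (lift_tm c t) = t.
Proof.
elim: t c u => [n|t1 IH1 t2 IH2|t IH] c u /=.
- sv.
- by rewrite IH1 IH2.
- by rewrite IH.
Qed.

Lemma lift_subst_a t c j u : c <= j ->
  lift_tm c (subst_tm j u t) = subst_tm j.+1 (lift_tm c u) (lift_tm c t).
Proof.
elim: t c j u => [n|t1 IH1 t2 IH2|t IH] c j u H /=.
- sv; case: ifP; sv.
- by rewrite IH1 // IH2.
- by rewrite IH // lift_lift.
Qed.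

Lemma lift_subst_b t c j u : j <= c ->
  lift_tm c (subst_tm j u t) = subst_tm j (lift_tm c u) (lift_tm c.+1 t).
Proof.
elim: t c j u => [n|t1 IH1 t2 IH2|t IH] c j u H /=.
- sv.
- by rewrite IH1 // IH2.
- by rewrite IH // lift_lift.
Qed.

Lemma subst_subst t i j u v : j <= i ->
  subst_tm i v (subst_tm j u t) = subst_tm j (subst_tm i v u) (subst_tm i.+1 (lift_tm j v) t).
Proof.
elim: t i j u v => [n|t1 IH1 t2 IH2|t IH] i j u v H /=.
- sv; rewrite ?subst_lift; sv.
- by rewrite IH1 // IH2.
- by rewrite IH // lift_subst_a // lift_lift.
Qed.

Lemma subst_var_lift t j : subst_tm j (Var j) (lift_tm j.+1 t) = t.
Proof.
elim: t j => [n|t1 IH1 t2 IH2|t IH] j /=.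
- sv.
- by rewrite IH1 IH2.
- by rewrite IH.
Qed.


Inductive star (R : tm -> tm -> Prop) : tm -> tm -> Prop :=
| s_refl t : star R t t
| s_step t u v : R t u -> star R u v -> star R t v.

Lemma star_trans R a b c : star R a b -> star R b c -> star R a c.
Proof. by elim=> [//|x y z Hxy _ IH] /IH; apply: s_step. Qed.

Lemma star1 (R : tm -> tm -> Prop) a b : R a b -> star R a b.
Proof. by move=> H; apply: s_step H (s_refl _ _). Qed.

Lemma star_map (R S : tm -> tm -> Prop) (f : tm -> tm) :
  (forall a b, R a b -> S (f a) (f b)) -> forall a b, star R a b -> star S (f a) (f b).
Proof.
move=> H a b; elim=> [t|x y z Hxy _ IH]; first exact: s_refl.
exact: s_step (H _ _ Hxy) IH.
Qed.

Lemma star_sub (R S : tm -> tm -> Prop) :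
  (forall a b, R a b -> star S a b) -> forall a b, star R a b -> star S a b.
Proof.
move=> H a b; elim=> [t|x y z Hxy _ IH]; first exact: s_refl.
exact: star_trans (H _ _ Hxy) IH.
Qed.

Definition diamond (R : tm -> tm -> Prop) :=
  forall a b c, R a b -> R a c -> exists d, R b d /\ R c d.

Lemma strip R : diamond R -> forall a b c, R a b -> star R a c ->
  exists d, star R b d /\ R c d.
Proof.
move=> HD a b c Hab Hac; elim: Hac b Hab => [t|x y z Hxy _ IH] b Hb.
- by exists b; split; [apply: s_refl|].
- have [d [Hbd Hyd]] := HD _ _ _ Hb Hxy.
  have [e [Hde Hze]] := IH _ Hyd.
  by exists e; split=> //; apply: s_step Hbd Hde.
Qed.

Lemma diamond_star R : diamond R -> diamond (star R).
Proof.
move=> HD a b c Hab; elim: Hab c => [t|x y z Hxy _ IH] c Hac.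
- by exists c; split; [|apply: s_refl].
- have [d [Hyd Hcd]] := strip HD Hxy Hac.
  have [e [Hze Hde]] := IH _ Hyd.
  by exists e; split=> //; apply: s_step Hcd Hde.
Qed.

Definition rc (R : tm -> tm -> Prop) a b := a = b \/ R a b.

Lemma star_rc R a b : star (rc R) a b <-> star R a b.
Proof.
split; apply: star_sub => x y.
- by case=> [->|H]; [apply: s_refl|apply: star1].
- by move=> H; apply: star1; right.
Qed.

Inductive bstep : tm -> tm -> Prop :=
| b_beta t u : bstep (App (Lam t) u) (subst_tm 0 u t)
| b_appl t t' u : bstep t t' -> bstep (App t u) (App t' u)
| b_appr t u u' : bstep u u' -> bstep (App t u) (App t u')
| b_lam t t' : bstep t t' -> bstep (Lam t) (Lam t').

Inductive estep : tm -> tm -> Prop :=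
| e_eta t : estep (Lam (App (lift_tm 0 t) (Var 0))) t
| e_appl t t' u : estep t t' -> estep (App t u) (App t' u)
| e_appr t u u' : estep u u' -> estep (App t u) (App t u')
| e_lam t t' : estep t t' -> estep (Lam t) (Lam t').

Lemma step_be t u : step t u <-> bstep t u \/ estep t u.
Proof.
split.
- elim=> {t u}.
  + by left; constructor.
  + by right; constructor.
  + by move=> t t' u _ [H|H]; [left|right]; constructor.
  + by move=> t t' u _ [H|H]; [left|right]; constructor.
  + by move=> t t' _ [H|H]; [left|right]; constructor.
- case.
  + by elim=> *; constructor.
  + by elim=> *; constructor.
Qed.

Inductive pb : tm -> tm -> Prop :=
| pb_var n : pb (Var n) (Var n)
| pb_app t t' u u' : pb t t' -> pb u u' -> pb (App t u) (App t' u')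
| pb_lam t t' : pb t t' -> pb (Lam t) (Lam t')
| pb_beta t t' u u' : pb t t' -> pb u u' -> pb (App (Lam t) u) (subst_tm 0 u' t').

Lemma pb_refl t : pb t t.
Proof. by elim: t => *; constructor. Qed.

Lemma pb_lift t t' : pb t t' -> forall c, pb (lift_tm c t) (lift_tm c t').
Proof.
elim=> {t t'} /=.
- by move=> n c; case: ifP => _; constructor.
- by move=> *; constructor.
- by move=> *; constructor.
- move=> t t' u u' _ IH1 _ IH2 c.
  rewrite lift_subst_b //; exact: pb_beta.
Qed.

Lemma pb_subst t t' : pb t t' -> forall j u u', pb u u' ->
  pb (subst_tm j u t) (subst_tm j u' t').
Proof.
elim=> {t t'} /=.
- by move=> n j u u' H; case: ifP => // _; case: ifP => _; constructor.
- by move=> *; constructor; auto.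
- by move=> t t' _ IH j u u' H; constructor; apply: IH; apply: pb_lift.
- move=> t t' s s' _ IH1 _ IH2 j u u' H.
  rewrite (subst_subst _ _ _ (leq0n j)).
  apply: pb_beta; [apply: IH1; apply: pb_lift|apply: IH2] => //.
Qed.

Fixpoint cd (t : tm) : tm :=
  match t with
  | Var n => Var n
  | App (Lam b) u => subst_tm 0 (cd u) (cd b)
  | App t u => App (cd t) (cd u)
  | Lam b => Lam (cd b)
  end.

Lemma pb_cd t t' : pb t t' -> pb t' (cd t).
Proof.
elim=> {t t'} /=.
- by move=> n; constructor.
- move=> t t' u u' H1 IH1 _ IH2.
  destruct t; try (by constructor).
  inversion H1; subst. simpl in IH1. inversion IH1; subst.
  exact: pb_beta.
- by move=> *; constructor.
- move=> t t' u u' _ IH1 _ IH2; exact: pb_subst.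
Qed.

Lemma pb_diamond : diamond pb.
Proof. move=> a b c H1 H2; exists (cd a); split; exact: pb_cd. Qed.

Lemma bstep_pb a b : bstep a b -> pb a b.
Proof.
elim=> {a b}; try by move=> *; constructor; auto using pb_refl.
Qed.

Lemma bstar_app a a' b b' : star bstep a a' -> star bstep b b' ->
  star bstep (App a b) (App a' b').
Proof.
move=> H1 H2; apply: (@star_trans _ _ (App a' b)).
- by apply: (star_map (f := fun x => App x b)) H1 => *; constructor.
- by apply: (star_map (f := fun x => App a' x)) H2 => *; constructor.
Qed.

Lemma pb_bstar a b : pb a b -> star bstep a b.
Proof.
elim=> {a b}.
- move=> n; exact: s_refl.
- move=> *; exact: bstar_app.
- move=> t t' _ H; by apply: (star_map (f := Lam)) H => *; constructor.
- move=> t t' u u' _ H1 _ H2.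
  apply: (@star_trans _ _ (App (Lam t') u')).
  + apply: bstar_app => //.
    by apply: (star_map (f := Lam)) H1 => *; constructor.
  + apply: star1; constructor.
Qed.

Lemma beta_cr : diamond (star bstep).
Proof.
move=> a b c H1 H2.
have H1' : star pb a b by apply: star_sub H1 => x y H; apply: star1; apply: bstep_pb.
have H2' : star pb a c by apply: star_sub H2 => x y H; apply: star1; apply: bstep_pb.
have [d [Hb Hc]] := diamond_star pb_diamond H1' H2'.
by exists d; split; apply: star_sub pb_bstar _ _ _.
Qed.


Lemma lift_inj t t' c : lift_tm c t = lift_tm c t' -> t = t'.
Proof.
elim: t t' c => [n|a IHa b IHb|b IH] [m|a' b'|b'] c /=;
  repeat (case: ifP => /= ?); move=> E; inversion E; subst; try done;
  try (f_equal; lia).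
- by rewrite (IHa _ _ H0) (IHb _ _ H1).
- by rewrite (IH _ _ H0).
Qed.

Lemma lift_inv b x c d : d <= c -> lift_tm c.+1 b = lift_tm d x ->
  exists y, b = lift_tm d y /\ x = lift_tm c y.
Proof.
elim: b x c d => [n|a IHa b IHb|b IH] [m|a' b'|b'] c d Hdc /=;
  repeat (case: ifP => /= ?); move=> E; inversion E; subst; try done.
all: try (match goal with |- exists y, Var ?n = _ /\ Var ?m = _ =>
  exists (Var (if m < c then m else m.-1)); case: (m < c) / ltnP => ? end; simpl;
  repeat (case: ifP => /= ?); split; try done; try (f_equal; lia); lia).
- have [y1 [-> ->]] := IHa _ _ _ Hdc H0.
  have [y2 [-> ->]] := IHb _ _ _ Hdc H1.
  by exists (App y1 y2).
- have [y [-> ->]] := IH _ c.+1 d.+1 Hdc H0.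
  by exists (Lam y).
Qed.

Lemma lift_var0 b c : lift_tm c.+1 b = Var 0 -> b = Var 0.
Proof. case: b => //= n; case: ifP => // ? [E]; by subst. Qed.

Lemma estep_lift t t' : estep t t' -> forall c, estep (lift_tm c t) (lift_tm c t').
Proof.
elim=> {t t'} /=; try by move=> *; constructor; auto.
move=> t c; rewrite lift_lift //; exact: e_eta.
Qed.

Lemma estep_lift_inv t c u : estep (lift_tm c t) u ->
  exists t', u = lift_tm c t' /\ estep t t'.
Proof.
elim: t c u => [n|a IHa b IHb|b IH] c u /=.
- by case: ifP => _ H; inversion H.
- move=> H; inversion H; subst.
  + have [x [-> Hx]] := IHa _ _ H3; exists (App x b); split => //; exact: e_appl.
  + have [x [-> Hx]] := IHb _ _ H3; exists (App a x); split => //; exact: e_appr.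
- move=> H; inversion H; subst.
  + destruct b as [n|b1 b2|]; simpl in H1; try (move: H1; case: ifP => //); try discriminate.
    case: H1 => E1 E2.
    have -> := lift_var0 (esym E2).
    have [y [-> ->]] := lift_inv (leq0n c) (esym E1).
    by exists y; split => //; apply: e_eta.
  + have [x [-> Hx]] := IH _ _ H1; exists (Lam x); split => //; exact: e_lam.
Qed.

Lemma bstep_lift_inv t c u : bstep (lift_tm c t) u ->
  exists t', u = lift_tm c t' /\ bstep t t'.
Proof.
elim: t c u => [n|a IHa b IHb|b IH] c u /=.
- by case: ifP => _ H; inversion H.
- move=> H; inversion H; subst.
  + destruct a as [| |a0]; simpl in H1; try (case: ifP H1 => _ //); try discriminate.
    case: H1 => E; subst.
    exists (subst_tm 0 b a0); split; last exact: b_beta.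
    by rewrite lift_subst_b.
  + have [x [-> Hx]] := IHa _ _ H3; exists (App x b); split => //; exact: b_appl.
  + have [x [-> Hx]] := IHb _ _ H3; exists (App a x); split => //; exact: b_appr.
- move=> H; inversion H; subst.
  have [x [-> Hx]] := IH _ _ H1; exists (Lam x); split => //; exact: b_lam.
Qed.

Lemma eta_diamond : diamond (rc estep).
Proof.
have key : forall s t u, estep s t -> estep s u -> exists w, rc estep t w /\ rc estep u w.
  move=> s t u H; elim: H u => {s t}.
  - move=> t u H; inversion H; subst.
    + move: (lift_inj H1) => E; subst; by exists t; split; left.
    + inversion H1; subst.
      * lazymatch goal with Hx : estep (lift_tm 0 _) _ |- _ =>
          have [x [-> Hx']] := estep_lift_inv Hx end.
        by exists x; split; right => //; apply: e_eta.
      * lazymatch goal with Hx : estep (Var _) _ |- _ => inversion Hx end.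
  - move=> t t' v Ht IH u H; inversion H; subst.
    + have [w [Hw1 Hw2]] := IH _ ltac:(match goal with Hx : _ _ _ |- _ => exact Hx end).
      exists (App w v); split.
      * by case: Hw1 => [->|Hw1]; [left|right; apply: e_appl].
      * by case: Hw2 => [->|Hw2]; [left|right; apply: e_appl].
    + by exists (App t' u'); split; right; constructor.
  - move=> t v v' Hv IH u H; inversion H; subst.
    + by exists (App t'  v'); split; right; constructor.
    + have [w [Hw1 Hw2]] := IH _ ltac:(match goal with Hx : _ _ _ |- _ => exact Hx end).
      exists (App t w); split.
      * by case: Hw1 => [->|Hw1]; [left|right; apply: e_appr].
      * by case: Hw2 => [->|Hw2]; [left|right; apply: e_appr].
  - move=> t t' Ht IH u H; inversion H; subst.
    + inversion Ht; subst.
      * lazymatch goal with Hx : estep (lift_tm 0 _) _ |- _ =>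
          have [x [-> Hx']] := estep_lift_inv Hx end.
        by exists x; split; right => //; apply: e_eta.
      * lazymatch goal with Hx : estep (Var _) _ |- _ => inversion Hx end.
    + have [w [Hw1 Hw2]] := IH _ ltac:(match goal with Hx : _ _ _ |- _ => exact Hx end).
      exists (Lam w); split.
      * by case: Hw1 => [->|Hw1]; [left|right; apply: e_lam].
      * by case: Hw2 => [->|Hw2]; [left|right; apply: e_lam].
move=> a b c [<-|Hb] [<-|Hc].
- by exists a; split; left.
- by exists c; split; [right|left].
- by exists b; split; [left|right].
- exact: key Hb Hc.
Qed.

Lemma estep_subst_l b b' : estep b b' -> forall j a, estep (subst_tm j a b) (subst_tm j a b').
Proof.
elim=> {b b'} /=; try by move=> *; constructor; auto.
move=> t j a; rewrite -lift_subst_a //; exact: e_eta.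
Qed.

Lemma estar_app a a' b b' : star estep a a' -> star estep b b' ->
  star estep (App a b) (App a' b').
Proof.
move=> H1 H2; apply: (@star_trans _ _ (App a' b)).
- by apply: (star_map (R := _) (S := _) (f := fun x => App x b)) H1 => *; constructor.
- by apply: (star_map (R := _) (S := _) (f := fun x => App a' x)) H2 => *; constructor.
Qed.

Lemma estep_subst_r a a' : estep a a' -> forall b j,
  star estep (subst_tm j a b) (subst_tm j a' b).
Proof.
move=> Ha b; elim: b a a' Ha => [n|b1 IH1 b2 IH2|b IH] a a' Ha j /=.
- case: ifP => _; [exact: star1|exact: s_refl].
- by apply: estar_app; auto.
- apply: (star_map (R := estep) (S := _) (f := Lam)); first by move=> *; constructor.
  apply: IH; exact: estep_lift.
Qed.

Lemma commute1 s t u : bstep s t -> estep s u ->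
  exists w, star estep t w /\ rc bstep u w.
Proof.
move=> H; elim: H u => {s t}.
- move=> t v u H; inversion H; subst.
  + inversion H3; subst.
    * simpl. rewrite subst_lift. by eexists; split; [apply: s_refl|left].
    * eexists; split; first by apply: star1; apply: estep_subst_l; eassumption.
      by right; constructor.
  + eexists; split; first by apply: estep_subst_r; eassumption.
    by right; constructor.
- move=> t t' v Ht IH u H; inversion H; subst.
  + have [w [Hw1 Hw2]] := IH _ ltac:(match goal with Hx : _ _ _ |- _ => exact Hx end).
    exists (App w v); split.
    * by apply: (star_map (R := _) (S := _) (f := fun x => App x v)) Hw1 => *; constructor.
    * by case: Hw2 => [->|Hw2]; [left|right; apply: b_appl].
  + exists (App t' u'); split; first by apply: star1; constructor.
    by right; constructor.
- move=> t v v' Hv IH u H; inversion H; subst.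
  + exists (App t' v'); split; first by apply: star1; constructor.
    by right; constructor.
  + have [w [Hw1 Hw2]] := IH _ ltac:(match goal with Hx : _ _ _ |- _ => exact Hx end).
    exists (App t w); split.
    * by apply: (star_map (R := _) (S := _) (f := fun x => App t x)) Hw1 => *; constructor.
    * by case: Hw2 => [->|Hw2]; [left|right; apply: b_appr].
- move=> t t' Ht IH u H; inversion H; subst.
  + inversion Ht; subst.
    * destruct u as [n| |d0]; simpl in H1; try (move: H1; case: ifP => //); try discriminate.
      case: H1 => E; subst.
      rewrite subst_var_lift.
      by exists (Lam d0); split; [apply: s_refl|left].
    * have [x [-> Hx]] := bstep_lift_inv H3.
      exists x; split; first by apply: star1; apply: e_eta.
      by right.
    * inversion H3.
  + have [w [Hw1 Hw2]] := IH _ ltac:(match goal with Hx : _ _ _ |- _ => exact Hx end).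
    exists (Lam w); split.
    * by apply: (star_map (R := _) (S := _) (f := Lam)) Hw1 => *; constructor.
    * by case: Hw2 => [->|Hw2]; [left|right; apply: b_lam].
Qed.

Lemma commuteA s t u : bstep s t -> star estep s u ->
  exists w, star estep t w /\ rc bstep u w.
Proof.
move=> Hb He; elim: He t Hb => {s u}.
- by move=> s t Hb; exists t; split; [apply: s_refl|right].
- move=> s u1 u Hu1 Hs IH t Hb.
  have [w1 [Hw1 [E|Hw1']]] := commute1 Hb Hu1.
  + subst w1. exists u; split; last by left.
    exact: star_trans Hw1 Hs.
  + have [w2 [Hw2 Hw2']] := IH _ Hw1'.
    by exists w2; split => //; apply: star_trans Hw1 Hw2.
Qed.

Lemma commuteB s t u : star bstep s t -> star estep s u ->
  exists w, star estep t w /\ star bstep u w.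
Proof.
move=> Hb; elim: Hb u => {s t}.
- by move=> s u He; exists u; split => //; apply: s_refl.
- move=> s t1 t Ht1 _ IH u He.
  have [w1 [Hw1 Hw1']] := commuteA Ht1 He.
  have [w [Hw Hw']] := IH _ Hw1.
  exists w; split => //.
  case: Hw1' => [->|H] //; exact: s_step H Hw'.
Qed.

Lemma eta_cr : diamond (star estep).
Proof.
move=> a b c /star_rc H1 /star_rc H2.
have [d [H3 H4]] := diamond_star eta_diamond H1 H2.
by exists d; split; apply/star_rc.
Qed.

Definition SU a b := star bstep a b \/ star estep a b.

Lemma SU_diamond : diamond SU.
Proof.
move=> a b c [H1|H1] [H2|H2].
- by have [d [? ?]] := beta_cr H1 H2; exists d; split; left.
- by have [d [? ?]] := commuteB H1 H2; exists d; split; [right|left].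
- by have [d [? ?]] := commuteB H2 H1; exists d; split; [left|right].
- by have [d [? ?]] := eta_cr H1 H2; exists d; split; right.
Qed.

Lemma step_SU a b : star step a b <-> star SU a b.
Proof.
split; apply: star_sub => x y.
- by case/step_be => H; apply: star1; [left|right]; apply: star1.
- case=> H; apply: star_sub H => x' y' H'; apply: star1; apply/step_be; auto.
Qed.

Lemma conv_join t u : conv t u -> exists w, star step t w /\ star step u w.
Proof.
elim=> {t u}.
- by move=> t u H; exists u; split; [apply: star1|apply: s_refl].
- by move=> t; exists t; split; apply: s_refl.
- by move=> t u _ [w [? ?]]; exists w.
- move=> t u v _ [w1 [H1 H2]] _ [w2 [H3 H4]].
  move/step_SU: H2 => H2; move/step_SU: H3 => H3.
  have [d [H5 H6]] := diamond_star SU_diamond H2 H3.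
  exists d; split.
  + apply: star_trans H1 _; exact/step_SU.
  + apply: star_trans H4 _; exact/step_SU.
Qed.


Fixpoint sem (T : ty) : finType :=
  match T with TO => bool | TArr a b => {ffun sem a -> sem b} end.

Definition ty_eq_dec (a b : ty) : {a = b} + {a <> b}.
Proof. decide equality. Defined.

Definition val := {T : ty & sem T}.
Definition env := nat -> val.
Definition scons (x : val) (rho : env) : env :=
  fun n => match n with 0 => x | n'.+1 => rho n' end.
Definition insert (rho : env) c (x : val) : env :=
  fun n => if n < c then rho n else if n == c then x else rho n.-1.

Fixpoint argsT (T : ty) : Type :=
  match T with TO => unit | TArr a b => (sem a * argsT b)%type end.

Fixpoint appall (T : ty) : sem T -> argsT T -> bool :=
  match T return sem T -> argsT T -> bool with
  | TO => fun v _ => v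
  | TArr a b => fun f p => appall (f p.1) p.2
  end.

Inductive den : env -> tm -> forall T, sem T -> Prop :=
| d_var rho n T v : rho n = existT _ T v -> den rho (Var n) v
| d_app rho t u s r (f : sem (TArr s r)) x :
    den rho t f -> den rho u x -> den rho (App t u) (f x)
| d_lam rho t s r (F : sem s -> sem r) :
    (forall x, den (scons (existT _ s x) rho) t (F x)) ->
    den rho (Lam t) ([ffun x => F x] : sem (TArr s r))
| d_glue rho t T (v : sem T) (V : argsT T -> sem T) :
    (forall a, den rho t (V a)) -> (forall a, appall (V a) a = appall v a) ->
    den rho t v.

Fixpoint def (T : ty) : sem T :=
  match T return sem T with TO => false | TArr a b => [ffun _ => def b] end.
Fixpoint oth (T : ty) : sem T :=
  match T return sem T with TO => true | TArr a b => [ffun _ => oth b] end.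
Fixpoint defargs (T : ty) : argsT T :=
  match T return argsT T with TO => tt | TArr a b => (def a, defargs b) end.

Lemma def_oth T : def T <> oth T.
Proof.
elim: T => [//|a _ b IH] /= E; apply: IH.
by move: (congr1 (fun f : {ffun sem a -> sem b} => f (def a)) E); rewrite !ffunE.
Qed.

Lemma appall_ext T (v v' : sem T) : (forall a, appall v a = appall v' a) -> v = v'.
Proof.
elim: T v v' => [|a IHa b IHb] v v' H; first exact: (H tt).
apply/ffunP => x; apply: IHb => p; exact: (H (x, p)).
Qed.

Lemma existT_inj T (v v' : sem T) : existT sem T v = existT sem T v' -> v = v'.
Proof. exact: (@inj_pair2_eq_dec ty ty_eq_dec (fun T => sem T) T v v'). Qed.

Lemma den_ext rho t T (v : sem T) : den rho t v -> forall rho', (forall n, rho n = rho' n) -> den rho' t v.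
Proof.
elim=> {rho t T v}.
- move=> rho n T v E rho' H; apply: d_var; by rewrite -H.
- move=> rho t u s r f x _ IH1 _ IH2 rho' H; apply: d_app; auto.
- move=> rho t s r F _ IH rho' H; apply: d_lam => x; apply: IH => -[|n] //=.
- move=> rho t T v V _ IH HV rho' H; apply: (d_glue (V := V)) => // a; auto.
Qed.

Lemma den_lift rho t T (v : sem T) : den rho t v -> forall c x, den (insert rho c x) (lift_tm c t) v.
Proof.
elim=> {rho t T v}.
- move=> rho n T v E c x /=; case: ifP => H /=; apply: d_var; rewrite /insert.
  + by rewrite H.
  have -> : (n.+1 < c) = false by lia.
  have -> : (n.+1 == c) = false by lia.
  done.
- move=> rho t u s r f x _ IH1 _ IH2 c y /=; apply: d_app; auto.
- move=> rho t s r F _ IH c y /=; apply: d_lam => x.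
  apply: (den_ext (IH x c.+1 y)) => -[|n] //=.
  rewrite /insert /= ltnS eqSS; case: ifP => // H1; case: ifP => // H2.
  case: n H1 H2 => [|n] /= H1 H2 //; lia.
- move=> rho t T v V _ IH HV c y; apply: (d_glue (V := V)) => // a; auto.
Qed.

Lemma den_unlift rho' t' T (v : sem T) : den rho' t' v -> forall rho c x t,
  (forall n, rho' n = insert rho c x n) -> t' = lift_tm c t -> den rho t v.
Proof.
elim=> {rho' t' T v}.
- move=> rho' n T v E rho c x [m|//|//] H /=.
  case: ifP => Hm [En]; subst; apply: d_var; rewrite -E H /insert.
  + by rewrite Hm.
  + have -> : (m.+1 < c) = false by lia.
    by have -> : (m.+1 == c) = false by lia.
- move=> rho' t u s r f y _ IH1 _ IH2 rho c x [m|a b|b] H /=;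
    try (case: ifP => _ //); try discriminate; case=> E1 E2.
  apply: d_app; [exact: IH1 E1|exact: IH2 E2].
- move=> rho' t s r F _ IH rho c x [m|a b|b] H /=;
    try (case: ifP => _ //); try discriminate; case=> E.
  apply: d_lam => y; apply: (IH y _ c.+1 x) => // -[|n] //=.
  rewrite H /insert /= ltnS eqSS; case: ifP => // H1; case: ifP => // H2.
  case: n H1 H2 => [|n] /= H1 H2 //; lia.
- move=> rho' t T v V _ IH HV rho c x t0 H E.
  apply: (d_glue (V := V)) => // a; exact: IH H E.
Qed.

Lemma existT_ty T T' (v : sem T) (v' : sem T') :
  existT sem T v = existT sem T' v' -> T = T'.
Proof. move=> E; exact: (congr1 (@projT1 _ _) E). Qed.

Lemma den_subst rho' t T (v : sem T) : den rho' t v -> forall rho j u s (x : sem s),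
  (forall n, rho' n = insert rho j (existT _ s x) n) -> den rho u x ->
  den rho (subst_tm j u t) v.
Proof.
elim=> {rho' t T v}.
- move=> rho' n T v E rho j u s x H Hu /=.
  move: E; rewrite H /insert.
  case: (ltngtP n j) => Hnj E /=.
  + by apply: d_var.
  + by apply: d_var.
  + subst n. have ET := existT_ty E; subst; by rewrite -(existT_inj E).
- move=> rho' t u0 s r f y _ IH1 _ IH2 rho j u s0 x H Hu /=.
  apply: d_app; [exact: IH1 H Hu|exact: IH2 H Hu].
- move=> rho' t s r F _ IH rho j u s0 x H Hu /=.
  apply: d_lam => y; apply: (IH y _ j.+1 _ s0 x).
  + move=> -[|n] //=.
    rewrite H /insert /= ltnS eqSS; case: ifP => // H1; case: ifP => // H2.
    case: n H1 H2 => [|n] /= H1 H2 //; lia.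
  + apply: (den_ext (den_lift Hu 0 _)) => -[|n] //.
- move=> rho' t T v V _ IH HV rho j u s x H Hu.
  apply: (d_glue (V := V)) => // a; exact: IH H Hu.
Qed.

Lemma den_lam_inv rho t T (v : sem T) : den rho t v -> forall b s r (f : sem (TArr s r)),
  t = Lam b -> existT sem T v = existT sem (TArr s r) f ->
  forall y, den (scons (existT _ s y) rho) b (f y).
Proof.
elim=> {rho t T v} //.
- move=> rho t s r F H _ b s0 r0 f [<-] E.
  have ET := existT_ty E; case: ET => ? ?; subst.
  by move=> y; rewrite -(existT_inj E) ffunE.
- move=> rho t T v V _ IH HV b s r f Et E.
  have ET := existT_ty E; subst T. have Ev := existT_inj E; subst v.
  move=> y; apply: (d_glue (V := fun a' => V (y, a') y)).
  + move=> a'; exact: IH Et erefl y.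
  + move=> a'; exact: (HV (y, a')).
Qed.

Lemma den_lam_arrow rho t T (v : sem T) : den rho t v -> forall b, t = Lam b ->
  exists s r, T = TArr s r.
Proof.
elim=> {rho t T v} //.
- by move=> rho t s r F _ _ b _; exists s, r.
- move=> rho t T v V _ IH _ b E; exact: (IH (defargs T) b E).
Qed.

Lemma den_var_inv rho t T (v : sem T) : den rho t v -> forall n, t = Var n ->
  rho n = existT _ T v.
Proof.
elim=> {rho t T v} //.
- by move=> rho n T v E m [<-].
- move=> rho t T v V _ IH HV n Et.
  have E0 := IH (defargs T) n Et.
  suff -> : v = V (defargs T) by [].
  apply: appall_ext => a; rewrite -HV.
  have Ea := IH a n Et; rewrite E0 in Ea.
  by rewrite (existT_inj Ea).
Qed.

Lemma den_app_inv rho t T (v : sem T) : den rho t v -> forall t1 u, t = App t1 u ->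
  forall a, exists s (f : sem (TArr s T)) x,
    den rho t1 f /\ den rho u x /\ appall (f x) a = appall v a.
Proof.
elim=> {rho t T v} //.
- move=> rho t u s r f x H1 _ H2 _ t1 u1 [<- <-] a.
  by exists s, f, x.
- move=> rho t T v V _ IH HV t1 u Et a.
  have [s [f [x [H1 [H2 H3]]]]] := IH a t1 u Et a.
  exists s, f, x; split => //; split => //; by rewrite H3 HV.
Qed.

Lemma scons_insert0 rho (x : val) n : scons x rho n = insert rho 0 x n.
Proof. by case: n. Qed.

Lemma den_bstep rho t T (v : sem T) : den rho t v -> forall t', bstep t t' -> den rho t' v.
Proof.
elim=> {rho t T v}.
- move=> rho n T v _ t' H; inversion H.
- move=> rho t u s r f x Ht IH1 Hu IH2 t' H; inversion H; subst.
  + have Hb := den_lam_inv Ht erefl erefl x.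
    apply: (den_subst Hb (rho := rho) (j := 0) (u := u) (s := s) (x := x)) => // n; exact: scons_insert0.
  + apply: d_app => //; exact: IH1.
  + apply: d_app => //; exact: IH2.
- move=> rho t s r F _ IH t' H; inversion H; subst.
  apply: d_lam => x; exact: IH.
- move=> rho t T v V _ IH HV t' H.
  apply: (d_glue (V := V)) => // a; exact: IH.
Qed.

Lemma den_eta_aux rho' t T (w : sem T) : den rho' t w -> forall t0 rho s (y : sem s),
  t = App (lift_tm 0 t0) (Var 0) -> (forall n, rho' n = scons (existT _ s y) rho n) ->
  forall a', exists g : sem (TArr s T), den rho t0 g /\ appall g (y, a') = appall w a'.
Proof.
elim=> {rho' t T w} //.
- move=> rho' t u s' r f x Ht _ Hu _ t0 rho s y [E1 E2] Hr a'; subst.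
  have Ev := den_var_inv Hu erefl.
  rewrite Hr /= in Ev.
  have ET := existT_ty Ev; subst s'.
  have Exy := existT_inj Ev; subst x.
  exists f; split => //.
  apply: (den_unlift Ht (rho := rho) (c := 0) (x := existT _ s y)) => //.
  by move=> n; rewrite Hr scons_insert0.
- move=> rho' t T w V _ IH HV t0 rho s y Et Hr a'.
  have [g [Hg1 Hg2]] := IH a' t0 rho s y Et Hr a'.
  by exists g; split => //; rewrite Hg2 HV.
Qed.

Lemma den_estep rho t T (v : sem T) : den rho t v -> forall t', estep t t' -> den rho t' v.
Proof.
elim=> {rho t T v}.
- move=> rho n T v _ t' H; inversion H.
- move=> rho t u s r f x Ht IH1 Hu IH2 t' H; inversion H; subst.
  + apply: d_app => //; exact: IH1.
  + apply: d_app => //; exact: IH2.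
- move=> rho t s r F HF IH t' H; inversion H; subst.
  + have HX : forall p : argsT (TArr s r), exists g : sem (TArr s r),
        den rho t' g /\ appall g p = appall ([ffun x => F x] : sem (TArr s r)) p.
      move=> [y a'].
      have [g [Hg1 Hg2]] := den_eta_aux (HF y) erefl (fun n => erefl) a'.
      by exists g; split => //=; rewrite ffunE.
    apply: (d_glue (V := fun p => proj1_sig (constructive_indefinite_description _ (HX p)))).
    * move=> p; exact: (proj1 (proj2_sig (constructive_indefinite_description _ (HX p)))).
    * move=> p; exact: (proj2 (proj2_sig (constructive_indefinite_description _ (HX p)))).
  + apply: d_lam => x; exact: IH.
- move=> rho t T v V _ IH HV t' H.
  apply: (d_glue (V := V)) => // a; exact: IH.
Qed.

Lemma den_star rho t t' T (v : sem T) : star step t t' -> den rho t v -> den rho t' v.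
Proof.
elim=> // x y z /step_be [H|H] _ IH Hx; apply: IH.
- exact: den_bstep Hx _ H.
- exact: den_estep Hx _ H.
Qed.


Lemma den_total G t T : typed G t T -> forall rho,
  (forall n, n < size G -> projT1 (rho n) = nth TO G n) -> exists v : sem T, den rho t v.
Proof.
elim=> {G t T}.
- move=> G n Hn rho H.
  have := H n Hn; case E: (rho n) => [T' v'] /= ET; subst T'.
  by exists v'; apply: d_var.
- move=> G t u s r _ IH1 _ IH2 rho H.
  have [f Hf] := IH1 rho H; have [x Hx] := IH2 rho H.
  by exists (f x); apply: d_app.
- move=> G t s r _ IH rho H.
  have HX : forall x : sem s, exists v : sem r, den (scons (existT _ s x) rho) t v.
    move=> x; apply: IH => -[|n] //= Hn; exact: H.
  exists [ffun x => proj1_sig (constructive_indefinite_description _ (HX x))].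
  apply: d_lam => x; exact: (proj2_sig (constructive_indefinite_description _ (HX x))).
Qed.

Fixpoint isne (t : tm) : bool :=
  match t with Var _ => true | App a b => isne a && isnf b | Lam _ => false end
with isnf (t : tm) : bool :=
  match t with Var _ => true | App a b => isne a && isnf b | Lam b => isnf b end.

Lemma ne_nf t : isne t -> isnf t.
Proof. by case: t. Qed.

Lemma lift_nf t c : isne (lift_tm c t) = isne t /\ isnf (lift_tm c t) = isnf t.
Proof.
elim: t c => [n|a IHa b IHb|b IH] c /=.
- by case: ifP.
- by rewrite (proj1 (IHa c)) (proj2 (IHb c)).
- by rewrite (proj2 (IH c.+1)).
Qed.

Lemma step_nf t t' : step t t' -> (isne t -> isne t') /\ (isnf t -> isnf t').
Proof.
elim=> {t t'} /=.
- by [].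
- move=> t0; split => // /andP [H _]; apply: ne_nf; by rewrite -(proj1 (lift_nf t0 0)).
- by move=> t t' u _ [H1 H2]; split => /andP [/H1 -> ->].
- by move=> t u u' _ [H1 H2]; split => /andP [-> /H2 ->].
- by move=> t t' _ [H1 H2].
Qed.

Lemma star_nf t t' : star step t t' -> isnf t -> isnf t'.
Proof. by elim=> // x y z /step_nf [_ H] _ IH /H. Qed.

Lemma den_fun t : (isne t -> forall rho T (v : sem T) T' (v' : sem T'),
   den rho t v -> den rho t v' -> existT sem T v = existT sem T' v') /\
  (isnf t -> forall rho T (v v' : sem T), den rho t v -> den rho t v' -> v = v').
Proof.
elim: t => [n|a IHa b IHb|b IH].
- have ne : isne (Var n) -> forall rho T (v : sem T) T' (v' : sem T'),
   den rho (Var n) v -> den rho (Var n) v' -> existT sem T v = existT sem T' v'.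
    move=> _ rho T v T' v' H1 H2.
    by rewrite -(den_var_inv H1 erefl) -(den_var_inv H2 erefl).
  split => // _ rho T v v' H1 H2; exact: existT_inj (ne erefl _ _ _ _ _ H1 H2).
- have ne : isne (App a b) -> forall rho T (v : sem T) T' (v' : sem T'),
   den rho (App a b) v -> den rho (App a b) v' -> existT sem T v = existT sem T' v'.
    move=> /= /andP [Ha Hb] rho T v T' v' H1 H2.
    have [s [f [x [Hf [Hx _]]]]] := den_app_inv H1 erefl (defargs T).
    have [s' [f' [x' [Hf' [Hx' _]]]]] := den_app_inv H2 erefl (defargs T').
    have E := (proj1 IHa) Ha _ _ _ _ _ Hf Hf'.
    have ET := existT_ty E; case: ET => ? ?; subst s' T'.
    congr existT; apply: appall_ext => p.
    have [s1 [f1 [x1 [Hf1 [Hx1 <-]]]]] := den_app_inv H1 erefl p.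
    have [s2 [f2 [x2 [Hf2 [Hx2 <-]]]]] := den_app_inv H2 erefl p.
    have E1 := (proj1 IHa) Ha _ _ _ _ _ Hf1 Hf2.
    have ET := existT_ty E1; case: ET => ?; subst s2.
    have Ef := existT_inj E1; subst f2.
    by rewrite ((proj2 IHb) Hb _ _ _ _ Hx1 Hx2).
  split => // Hn rho T v v' H1 H2; exact: existT_inj (ne Hn _ _ _ _ _ H1 H2).
- split => // /= Hb rho T v v' H1 H2.
  have [s [r ET]] := den_lam_arrow H1 erefl; subst T.
  apply/ffunP => y.
  exact: ((proj2 IH) Hb _ _ _ _ (den_lam_inv H1 erefl erefl y) (den_lam_inv H2 erefl erefl y)).
Qed.


Lemma iter_periodic (X : finType) (g : X -> X) (z : X) :
  exists N p, 0 < p /\ forall m, N <= m -> iter (m + p) g z = iter m g z.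
Proof.
pose h (i : 'I_(#|X|.+1)) := iter i g z.
have : ~~ injectiveb h.
  apply/negP => /injectiveP Hi.
  have := leq_card h Hi; rewrite card_ord; lia.
move/injectivePn => [i [j Hij Eij]].
have key : forall a b, a < b -> iter a g z = iter b g z ->
    exists N p, 0 < p /\ forall m, N <= m -> iter (m + p) g z = iter m g z.
  move=> a b Hab E; exists a, (b - a); split; first lia.
  move=> m Hm.
  have -> : m + (b - a) = (m - a) + b by lia.
  rewrite iterD -E -iterD; congr iter; lia.
case: (ltngtP i j) => H.
- exact: key H Eij.
- exact: key H (esym Eij).
- by move/val_inj: H Hij => ->; rewrite eqxx.
Qed.

Definition omegaS (T : ty) : sem (omega T) -> sem (omega T) :=
  fun n => [ffun f : sem (TArr T T) => [ffun x : sem T => f ((n f) x)]].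

Definition cval (T : ty) (k : nat) : sem (omega T) :=
  [ffun f : sem (TArr T T) => [ffun x : sem T => iter k f x]].

Lemma cval_iter T k : cval T k = iter k (@omegaS T) (cval T 0).
Proof.
elim: k => [//|k IH]; rewrite iterS -IH.
apply/ffunP => f; apply/ffunP => x; by rewrite !ffunE.
Qed.

Lemma cval_01 T : cval T 0 <> cval T 1.
Proof.
move=> E.
have := congr1 (fun n : sem (omega T) => n ([ffun _ => oth T] : sem (TArr T T)) (def T)) E.
rewrite /cval !ffunE /= ffunE; exact: def_oth.
Qed.

Lemma den_church rho T k : den rho (church k) (cval T k).
Proof.
apply: (d_lam (F := fun f : sem (TArr T T) => ([ffun x => iter k f x] : sem (TArr T T)))) => f.
apply: (d_lam (F := fun x : sem T => iter k f x)) => x.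
elim: k => [|k IH] /=; first by apply: d_var.
apply: (d_app (s := T)) => //; by apply: d_var.
Qed.

Lemma church_nf k : isnf (church k).
Proof. by rewrite /church /=; elim: k => //= k ->. Qed.

Lemma enum3 : enum 'I_3 = [:: inord 0; inord 1; inord 2].
Proof.
apply: (inj_map val_inj); rewrite val_enum_ord /=.
by rewrite !inordK.
Qed.


Lemma sem_periodic (A : nat -> Prop) (f : fn 3) :
  (forall x : 'I_3 -> nat,
     (A (arg3 x 0) -> f x = arg3 x 1) /\ (~ A (arg3 x 0) -> f x = arg3 x 2)) ->
  strictly_definable f ->
  exists (b : nat -> bool) N p, 1 < p /\ (forall m, b m <-> A m) /\
    (forall m, N <= m -> b (m + p) = b m).
Proof.
move=> Hf [tau [E [HT HC]]].
pose W := omega tau.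
have HT' : typed [::] E (TArr W (TArr W (TArr W W))) by exact: HT.
pose rho0 : env := fun _ => existT sem TO false.
have [e He] := den_total HT' (rho := rho0) (fun n H => ltac:(by [])).
have key : forall x : 'I_3 -> nat,
    e (cval tau (x (inord 0))) (cval tau (x (inord 1))) (cval tau (x (inord 2)))
    = cval tau (f x).
  move=> x; have Hc := HC x; rewrite enum3 /= in Hc.
  have [w [H1 H2]] := conv_join Hc.
  have Da := d_app (s:=W) (r:=TArr W (TArr W W)) He (den_church rho0 tau (x (inord 0))).
  have Db := d_app (s:=W) (r:=TArr W W) Da (den_church rho0 tau (x (inord 1))).
  have D1 := d_app (s:=W) (r:=W) Db (den_church rho0 tau (x (inord 2))).
  have D2 := den_church rho0 tau (f x).
  exact: (proj2 (den_fun w)) (star_nf H2 (church_nf _)) _ _ _ _ (den_star H1 D1) (den_star H2 D2).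
pose b m := e (cval tau m) (cval tau 0) (cval tau 1) == cval tau 0.
have [N [p [Hp Hper]]] := iter_periodic (@omegaS tau) (cval tau 0).
exists b, N, (p + p); split; first lia.
split.
- move=> m.
  pose x : 'I_3 -> nat := fun i => if nat_of_ord i == 0 then m else if nat_of_ord i == 1 then 0 else 1.
  have Hx0 : arg3 x 0 = m by rewrite /arg3 /x inordK.
  have Hx1 : arg3 x 1 = 0 by rewrite /arg3 /x inordK.
  have Hx2 : arg3 x 2 = 1 by rewrite /arg3 /x inordK.
  have Hk := key x.
  change (x (inord 0)) with (arg3 x 0) in Hk.
  change (x (inord 1)) with (arg3 x 1) in Hk.
  change (x (inord 2)) with (arg3 x 2) in Hk.
  rewrite Hx0 Hx1 Hx2 in Hk.
  rewrite /b Hk.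
  have [H1 H2] := Hf x; rewrite Hx0 Hx1 Hx2 in H1 H2.
  split.
  + move=> /eqP E1; apply: NNPP => NA; rewrite (H2 NA) in E1.
    exact: cval_01 (esym E1).
  + by move=> /H1 ->.
- move=> m Hm.
  have Hc : forall k, N <= k -> cval tau (k + p) = cval tau k.
    by move=> k Hk; rewrite (cval_iter tau (k + p)) (cval_iter tau k) Hper.
  by rewrite /b addnA !Hc //; lia.
Qed.


Definition PM : fn 3 := fun x => x (inord 0).
Definition sel (c : bool) : fn 3 := fun x => if c then x (inord 1) else x (inord 2).

Lemma classG_PM : classG PM.
Proof. apply: G_ep; exact: (ep_proj (inord 0)). Qed.

Lemma classG_sel c : classG (sel c).
Proof.
apply: (G_ext (f := if c then (fun x : 'I_3 -> nat => x (inord 1)) else (fun x => x (inord 2)))).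
- by case: c; apply: G_ep; apply: ep_proj.
- by rewrite /sel; case: c.
Qed.

Definition IFZ : fn 3 := fun x => if arg3 x 0 == 0 then arg3 x 1 else arg3 x 2.
Definition Hk (k : nat) : fn 3 := if k == 0 then IFZ else f2 k.

Lemma Hk_eval k y : Hk k y = if arg3 y 0 <= k then arg3 y 1 else arg3 y 2.
Proof.
rewrite /Hk; case: eqP => [->|_] //.
by rewrite /IFZ leqn0.
Qed.

Lemma classG_Hk k : classG (Hk k).
Proof.
rewrite /Hk; case: eqP => H.
- apply: G_ep; exact: ep_ifzero.
- apply: G_f2; lia.
Qed.

Definition trip (S g : fn 3) : 'I_3 -> fn 3 :=
  fun i => if nat_of_ord i == 0 then PM else if nat_of_ord i == 1 then S else g.

Definition stepk (k : nat) (c : bool) (g : fn 3) : fn 3 := comp_fn (Hk k) (trip (sel c) g).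

Lemma stepk_eval k c g x :
  stepk k c g x = if PM x <= k then sel c x else g x.
Proof.
rewrite /stepk /comp_fn Hk_eval /arg3 /trip !inordK //.
Qed.

Lemma classG_stepk k c g : classG g -> classG (stepk k c g).
Proof.
move=> Hg; apply: G_comp; first exact: classG_Hk.
move=> i; rewrite /trip; case: ifP => _; first exact: classG_PM.
case: ifP => _; [exact: classG_sel|exact: Hg].
Qed.


Definition gsP (b : nat -> bool) (N p : nat) : 'I_p.+1 -> fn 3 :=
  fun i => if nat_of_ord i == 0 then PM else sel (b (N * p + (nat_of_ord i).-1)).

Definition Per (b : nat -> bool) (N p : nat) : fn 3 := comp_fn (@f1 p) (@gsP b N p).

Lemma classG_Per (b : nat -> bool) (N p : nat) (Hp : 1 < p) : classG (Per b N p).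
Proof.
apply: G_comp; first by apply: G_f1.
move=> i; rewrite /gsP; case: ifP => _; [exact: classG_PM|exact: classG_sel].
Qed.

Lemma per_k (b : nat -> bool) (N p : nat) (Hp : 1 < p) (Hper : forall m, N <= m -> b (m + p) = b m) m k : N <= m -> b (m + k * p) = b m.
Proof.
move=> Hm; elim: k => [|k IH]; first by rewrite addn0.
rewrite mulSn; have -> : m + (p + k * p) = (m + k * p) + p by lia.
by rewrite Hper ?IH //; lia.
Qed.

Lemma per_mod (b : nat -> bool) (N p : nat) (Hp : 1 < p) (Hper : forall m, N <= m -> b (m + p) = b m) m1 m2 : N <= m1 -> N <= m2 -> m1 %% p = m2 %% p -> b m1 = b m2.
Proof.
wlog H12 : m1 m2 / m1 <= m2.
  move=> W H1 H2 E; case: (leqP m1 m2) => H; first exact: W.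
  symmetry; apply: W => //; lia.
move=> H1 H2 E.
have E1 := divn_eq m1 p; have E2 := divn_eq m2 p.
have Hq : m1 %/ p <= m2 %/ p by apply: leq_div2r.
have Hq' : m1 %/ p * p <= m2 %/ p * p by rewrite leq_mul2r Hq orbT.
have -> : m2 = m1 + (m2 %/ p - m1 %/ p) * p by rewrite mulnBl; lia.
by rewrite (per_k Hp Hper).
Qed.

Lemma Per_eval (b : nat -> bool) (N p : nat) (Hp : 1 < p) (Hper : forall m, N <= m -> b (m + p) = b m) x : N <= PM x -> Per b N p x = sel (b (PM x)) x.
Proof.
move=> H.
have Hlt : (PM x %% p).+1 < p.+1 by rewrite ltnS ltn_mod; lia.
rewrite /Per /comp_fn /f1 /gsP inordK //=.
congr sel; apply: (per_mod Hp Hper).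
- apply: leq_trans (leq_addr _ _); rewrite leq_pmulr //; lia.
- done.
- by rewrite modnMDl modn_mod.
Qed.

Fixpoint Rd (b : nat -> bool) (N p : nat) (d : nat) : fn 3 :=
  match d with 0 => Per b N p | d'.+1 => stepk (N - d'.+1) (b (N - d'.+1)) (Rd b N p d') end.

Lemma classG_Rd (b : nat -> bool) (N p : nat) (Hp : 1 < p) (Hper : forall m, N <= m -> b (m + p) = b m) d : classG (Rd b N p d).
Proof. elim: d => [|d IH] /=; [exact: classG_Per Hp|exact: classG_stepk]. Qed.

Lemma Rd_eval (b : nat -> bool) (N p : nat) (Hp : 1 < p) (Hper : forall m, N <= m -> b (m + p) = b m) d x : d <= N -> N - d <= PM x -> Rd b N p d x = sel (b (PM x)) x.
Proof.
elim: d => [|d IH] /= Hd Hx.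
- apply: (Per_eval Hp Hper); lia.
- rewrite stepk_eval; case: ifP => H.
  + have -> : PM x = N - d.+1 by lia.
    done.
  + apply: IH; lia.
Qed.



Lemma classG_periodic (g : fn 3) (b : nat -> bool) N p : 1 < p ->
  (forall m, N <= m -> b (m + p) = b m) ->
  (forall x, g x = if b (arg3 x 0) then arg3 x 1 else arg3 x 2) -> classG g.
Proof.
move=> Hp Hper Hg.
apply: (G_ext (f := Rd b N p N)); first exact: (classG_Rd Hp Hper).
move=> x; rewrite (Rd_eval Hp Hper) // ?subnn // Hg.
Qed.


Theorem theorem3 (A : nat -> Prop) (f : fn 3) :
  (forall x : 'I_3 -> nat,
     (A (arg3 x 0) -> f x = arg3 x 1) /\ (~ A (arg3 x 0) -> f x = arg3 x 2)) ->
  ~ strictly_definable f \/ classG f.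
Proof.
move=> Hf; case: (classic (strictly_definable f)) => H; [right|by left].
have [b [N [p [Hp [Hb Hper]]]]] := sem_periodic Hf H.
apply: (classG_periodic (b := b) (N := N) (p := p)) => // x.
have [H1 H2] := Hf x; case E: (b (arg3 x 0)).
- apply: H1; exact/Hb.
- apply: H2 => /Hb; by rewrite E.
Qed.
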